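(* For all integers $m\ge 4$ and $n\ge 10$, the complete bipartite graph $K_{m,n}$ belongs to $\mathcal{S}_3$.
   Context: $G\in\mathcal{S}_3$ means: for every $\beta:V(G)\to\mathbb{Z}_3$ with $\sum_v\beta(v)\equiv0\pmod3$ there is a strongly-connected orientation $D$ of $G$ with $d^+_D(v)-d^-_D(v)\equiv\beta(v)\pmod3$ for all $v$. *)

(* Defs.v *)
From HB Require Import structures.
From mathcomp Require Import all_boot all_order all_algebra.
Set Implicit Arguments. Unset Strict Implicit. Unset Printing Implicit Defensive.
Import GRing.Theory.

Definition simple_graph (V : finType) (adj : rel V) : Prop :=
  irreflexive adj /\ symmetric adj.

Definition is_orientation (V : finType) (adj D : rel V) : Prop :=
  (forall x y, D x y -> adj x y) /\
  (forall x y, adj x y -> (D x y && ~~ D y x) || (D y x && ~~ D x y)).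

Definition outdeg (V : finType) (D : rel V) (v : V) : nat := #|[set u | D v u]|.
Definition indeg (V : finType) (D : rel V) (v : V) : nat := #|[set u | D u v]|.

Definition strongly_connected (V : finType) (D : rel V) : Prop :=
  forall x y, connect D x y.

Definition in_S3 (V : finType) (adj : rel V) : Prop :=
  forall beta : V -> 'Z_3, (\sum_(v : V) beta v = 0)%R ->
  exists D : rel V, is_orientation adj D /\ strongly_connected D /\
    forall v, ((outdeg D v)%:R - (indeg D v)%:R = beta v)%R.

Definition Kmn_adj (m n : nat) : rel ('I_m + 'I_n)%type :=
  fun x y => match x, y with
             | inl _, inr _ => true
             | inr _, inl _ => true
             | _, _ => false
             end.
Arguments Kmn_adj : clear implicits.

(* Main.v *)
Require Import Defs.
From mathcomp Require Import all_boot all_order all_algebra.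
From mathcomp Require Import ring.
Set Implicit Arguments. Unset Strict Implicit. Unset Printing Implicit Defensive.

Definition allvecs : seq (seq bool) := [:: [:: false; false; false; false];
 [:: false; false; false; true];
 [:: false; false; true; false];
 [:: false; false; true; true];
 [:: false; true; false; false];
 [:: false; true; false; true];
 [:: false; true; true; false];
 [:: false; true; true; true];
 [:: true; false; false; false];
 [:: true; false; false; true];
 [:: true; false; true; false];
 [:: true; false; true; true];
 [:: true; true; false; false];
 [:: true; true; false; true];
 [:: true; true; true; false];
 [:: true; true; true; true]].
Definition wt (v : seq bool) := sumn (map nat_of_bool v).
Definition cand (g : nat) := [seq v <- allvecs | (0 < wt v < 4) && (wt v %% 3 == g %% 3)].
Definition upd (d : seq nat) (v : seq bool) := [seq (x.1 + 2 * x.2) %% 3 | x <- zip d (map nat_of_bool v)].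
Fixpoint search (d : seq nat) (gs : seq nat) : option (seq (seq bool)) :=
  match gs with
  | [::] => if all (fun x => x %% 3 == 0) d then Some [::] else None
  | g :: gs' =>
     let fix try (cs : seq (seq bool)) :=
       match cs with
       | [::] => None
       | v :: cs' => match search (upd d v) gs' with
                     | Some A => Some (v :: A)
                     | None => try cs'
                     end
       end in try (cand g)
  end.
Definition ent (A : seq (seq bool)) (p j : nat) := nth false (nth [::] A j) p.
Definition okA (d : seq nat) (g : seq nat) (A : seq (seq bool)) : bool :=
  all (fun j => [&& (sumn [seq nat_of_bool (ent A p j) | p <- iota 0 4] %% 3 == nth 0 g j %% 3),
                    has (fun p => ent A p j) (iota 0 4) & has (fun p => ~~ ent A p j) (iota 0 4)]) (iota 0 6) &&
  all (fun p => sumn [seq nat_of_bool (ent A p j) | j <- iota 0 6] %% 3 == nth 0 d p %% 3) (iota 0 3).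
Definition r3 := iota 0 3.
Definition chk2 : bool :=
  all (fun d0 => all (fun d1 => all (fun d2 =>
  all (fun g0 => all (fun g1 => all (fun g2 => all (fun g3 => all (fun g4 => all (fun g5 =>
    match search [:: d0; d1; d2] [:: g0; g1; g2; g3; g4; g5] with
    | Some A => okA [:: d0; d1; d2] [:: g0; g1; g2; g3; g4; g5] A
    | None => false end) r3) r3) r3) r3) r3) r3) r3) r3) r3.
Lemma chk2_true : chk2 = true. Proof. vm_compute. reflexivity. Qed.

Lemma sum_iota (k : nat) (F : nat -> nat) : \sum_(p < k) F p = sumn [seq F p | p <- iota 0 k].
Proof. by rewrite -(big_mkord xpredT) /index_iota subn0 sumnE big_map. Qed.

Lemma mem_r3 x : x %% 3 \in r3.
Proof. by rewrite mem_iota add0n ltn_pmod. Qed.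

Lemma adjuster (d g : nat -> nat) : exists A : seq (seq bool),
  (forall j, j < 6 -> (\sum_(p < 4) ent A p j) %% 3 = g j %% 3 /\
      (exists p, p < 4 /\ ent A p j) /\ (exists p, p < 4 /\ ~~ ent A p j)) /\
  (forall p, p < 3 -> (\sum_(j < 6) ent A p j) %% 3 = d p %% 3).
Proof.
have := chk2_true; rewrite /chk2.
move=> /allP /(_ _ (mem_r3 (d 0))) /allP /(_ _ (mem_r3 (d 1))) /allP /(_ _ (mem_r3 (d 2))).
move=> /allP /(_ _ (mem_r3 (g 0))) /allP /(_ _ (mem_r3 (g 1))) /allP /(_ _ (mem_r3 (g 2))).
move=> /allP /(_ _ (mem_r3 (g 3))) /allP /(_ _ (mem_r3 (g 4))) /allP /(_ _ (mem_r3 (g 5))).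
case: search => [A|//] /andP [/allP Hc /allP Hr].
exists A; split.
- move=> j hj; have /Hc/and3P [h1 /hasP [p hp1 hp2] /hasP [p' hp1' hp2']] : j \in iota 0 6 by rewrite mem_iota.
  split; last first.
    move: hp1 hp1'; rewrite !mem_iota /= => hp hp'.
    by split; [exists p | exists p'].
  rewrite (sum_iota _ (fun p => nat_of_bool (ent A p j))) (eqP h1).
  clear h1 hp1 hp2 hp1' hp2'; by do 6 (case: j hj => [|j] hj; first by rewrite /= modn_mod).
- move=> p hp; have /Hr/eqP h1 : p \in iota 0 3 by rewrite mem_iota.
  rewrite (sum_iota _ (fun j => nat_of_bool (ent A p j))) h1.
  clear h1; by do 3 (case: p hp => [|p] hp; first by rewrite /= modn_mod).
Qed.


Definition Dof m n (f : nat -> nat -> bool) : rel ('I_m + 'I_n) :=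
  fun x y => match x, y with
             | inl i, inr j => f i j
             | inr j, inl i => ~~ f i j
             | _, _ => false end.
Arguments Dof : clear implicits.

Lemma conn_lemma m n (f : nat -> nat -> bool) (hm : 4 <= m.+1)
  (H1 : forall t, t < 4 -> exists j, j < n.+1 /\ f t j /\ ~~ f ((t + 1) %% 4) j)
  (H2 : forall j, j < n.+1 -> exists p q, [/\ p < 4, q < 4, f p j & ~~ f q j])
  (H3 : forall i, 4 <= i -> i < m.+1 -> exists j k, [/\ j < n.+1, k < n.+1, f i j & ~~ f i k]) :
  strongly_connected (Dof m.+1 n.+1 f).
Proof.
set D := Dof m.+1 n.+1 f.
have stAB i j : i < m.+1 -> j < n.+1 -> f i j -> connect D (inl (inord i)) (inr (inord j)).
  by move=> hi hj hf; apply: connect1; rewrite /D /= !inordK.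
have stBA i j : i < m.+1 -> j < n.+1 -> ~~ f i j -> connect D (inr (inord j)) (inl (inord i)).
  by move=> hi hj hf; apply: connect1; rewrite /D /= !inordK.
pose T t := (inl (inord t) : 'I_m.+1 + 'I_n.+1).
have cyc t : t < 4 -> connect D (T t) (T ((t + 1) %% 4)).
  move=> ht; have [j [hj [h1 h2]]] := H1 t ht.
  apply: connect_trans (stAB _ _ _ hj h1) (stBA _ _ _ hj h2).
    exact: leq_trans ht hm.
  by apply: leq_trans hm; rewrite ltn_pmod.
have top t : t < 4 -> connect D (T 0) (T t) /\ connect D (T t) (T 0).
  have c01 := cyc 0 isT; have c12 := cyc 1 isT; have c23 := cyc 2 isT; have c30 := cyc 3 isT.
  rewrite /= in c01 c12 c23 c30.
  case: t => [|[|[|[|t]]]] // _; split; try exact: connect0.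
  - exact: c01.
  - exact: connect_trans (connect_trans c12 c23) c30.
  - exact: connect_trans c01 c12.
  - exact: connect_trans c23 c30.
  - exact: connect_trans (connect_trans c01 c12) c23.
  - exact: c30.
have hub x : connect D (T 0) x /\ connect D x (T 0).
  case: x => [i|j].
  - rewrite -(inord_val i); have hi := ltn_ord i.
    case: (ltnP i 4) => hi4; first exact: top.
    have [j [k [hj hk h1 h2]]] := H3 _ hi4 hi.
    have [p [q [hp hq hp1 hq1]]] := H2 _ hj.
    have [p' [q' [hp' hq' hp1' hq1']]] := H2 _ hk.
    have hpm x : x < 4 -> x < m.+1 by move=> hx; exact: leq_trans hx hm.
    split.
    + apply: connect_trans (proj1 (top _ hp')) _.
      exact: connect_trans (stAB _ _ (hpm _ hp') hk hp1') (stBA _ _ hi hk h2).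
    + apply: connect_trans _ (proj2 (top _ hq)).
      exact: connect_trans (stAB _ _ hi hj h1) (stBA _ _ (hpm _ hq) hj hq1).
  - rewrite -(inord_val j); have hj := ltn_ord j.
    have [p [q [hp hq hp1 hq1]]] := H2 _ hj.
    have hpm x : x < 4 -> x < m.+1 by move=> hx; exact: leq_trans hx hm.
    split.
    + exact: connect_trans (proj1 (top _ hp)) (stAB _ _ (hpm _ hp) hj hp1).
    + exact: connect_trans (stBA _ _ (hpm _ hq) hj hq1) (proj2 (top _ hq)).
move=> x y; exact: connect_trans (proj2 (hub x)) (proj1 (hub y)).
Qed.

Import GRing.Theory.

Section P3sec.

Local Open Scope ring_scope.

Lemma Z3nat (a : nat) : (a%:R : 'Z_3) = inZp a.
Proof. by apply: val_inj; rewrite /= Zp_nat. Qed.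

Lemma eqZ3 (a b : nat) : (a %% 3 = b %% 3)%N -> (a%:R : 'Z_3) = b%:R.
Proof. by move=> h; rewrite !Z3nat; apply: val_inj; rewrite /= h. Qed.

Lemma Z3_3 : (3%:R : 'Z_3) = 0.
Proof. by rewrite Z3nat; apply: val_inj. Qed.

Lemma Z3_val (x : 'Z_3) : ((val x)%:R : 'Z_3) = x.
Proof. by rewrite Z3nat; apply: val_inj; rewrite /= modn_small // ltn_ord. Qed.

Local Open Scope nat_scope.

Definition sv (x : nat) := if x %% 3 == 0 then 3 else x %% 3.
Lemma sv_mod x : sv x %% 3 = x %% 3.
Proof. rewrite /sv; case: eqP => [->|] //; by rewrite modn_mod. Qed.
Lemma sv_bnd x : 0 < sv x <= 3.
Proof.
rewrite /sv; case: eqP => // /eqP h.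
by rewrite lt0n h /= ltnW // ltn_pmod.
Qed.

Definition V (g t p : nat) : bool :=
  let g' := g %% 3 in let t' := t %% 4 in
  if g' == 1 then p == t' else if g' == 2 then (p == t') || (p == (t' + 2) %% 4)
  else p != (t' + 1) %% 4.

Lemma V_sum g t : (\sum_(p < 4) V g t p) %% 3 = g %% 3.
Proof.
rewrite /V; move: (g %% 3) (t %% 4) (ltn_pmod g (isT : 0 < 3)) (ltn_pmod t (isT : 0 < 4)).
move=> a b ha hb.
case: a ha => [|[|[|a]]] // _; case: b hb => [|[|[|[|b]]]] // _;
  by rewrite !big_ord_recr big_ord0.
Qed.

Lemma V_cyc g t : V g t (t %% 4) && ~~ V g t ((t %% 4 + 1) %% 4).
Proof.
rewrite /V; move: (g %% 3) (t %% 4) (ltn_pmod g (isT : 0 < 3)) (ltn_pmod t (isT : 0 < 4)).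
move=> a b ha hb.
by case: a ha => [|[|[|a]]] // _; case: b hb => [|[|[|[|b]]]] // _.
Qed.

Lemma sum_prefix k n (F : nat -> bool) : k <= n ->
  \sum_(j < n) ((j < k) && F j) = \sum_(j < k) F j.
Proof.
move=> hk; rewrite (big_ord_widen n (fun j => nat_of_bool (F j)) hk) [RHS]big_mkcond /=.
by apply: eq_bigr => j _; case: (j < k).
Qed.

Lemma sum_if n k (F G : nat -> bool) :
  \sum_(j < n) (if j < k then F j else G j : bool) =
  \sum_(j < n) ((j < k) && F j) + \sum_(j < n) ((k <= j) && G j).
Proof.
rewrite -big_split /=; apply: eq_bigr => j _.
by case: (ltnP j k) => _ /=; rewrite ?addn0.
Qed.

End P3sec.

Section P4sec.


Lemma core m n (hm : 4 <= m) (hn : 10 <= n) (c e : nat -> nat) :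
  ((\sum_(i < m) c i)%:R : 'Z_3)%R = ((\sum_(j < n) e j)%:R)%R ->
  exists f : nat -> nat -> bool,
   [/\ forall i, i < m -> (((\sum_(j < n) f i j)%:R : 'Z_3) = (c i)%:R)%R,
       forall j, j < n -> (((\sum_(i < m) f i j)%:R : 'Z_3) = (e j)%:R)%R,
       forall t, t < 4 -> exists j, j < n /\ f t j /\ ~~ f ((t + 1) %% 4) j,
       forall j, j < n -> exists p q, [/\ p < 4, q < 4, f p j & ~~ f q j]
     & forall i, 4 <= i -> i < m -> exists j k, [/\ j < n, k < n, f i j & ~~ f i k]].
Proof.
move=> hsum.
pose s i := sv (c i).
pose r j := \sum_(i < m) ((4 <= i) && (j < s i)).
pose base p := \sum_(j < n) ((6 <= j) && V (e j) j p).
have [A [HAc HAr]] := adjuster (fun p => c p + 2 * base p) (fun j => e j + 2 * r j).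
pose top i j := if j < 6 then ent A i j else V (e j) j i.
pose f i j := if i < 4 then top i j else j < s i.
have hn6 : 6 <= n by apply: leq_trans hn.
have rowtop p : p < 4 -> \sum_(j < n) f p j = \sum_(j < 6) ent A p j + base p.
  move=> hp; rewrite /f hp /top (sum_if n 6 (fun j => ent A p j) (fun j => V (e j) j p)).
  by rewrite (sum_prefix (fun j => ent A p j) hn6).
have rowlow i : 4 <= i -> \sum_(j < n) f i j = s i.
  move=> hi; rewrite /f ltnNge hi /=.
  have := sv_bnd (c i); rewrite -/(s i) => /andP [_ hs].
  rewrite (eq_bigr (fun j : 'I_n => nat_of_bool ((j < s i) && true))); last first.
    by move=> j _; rewrite andbT.
  rewrite (sum_prefix (fun _ => true) (leq_trans hs (leq_trans (isT : 3 <= 10) hn))).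
  by rewrite sum_nat_const card_ord muln1.
have col j : \sum_(i < m) f i j = \sum_(i < 4) top i j + r j.
  rewrite /f (sum_if m 4 (fun i => top i j) (fun i => j < s i)).
  by rewrite (sum_prefix (fun i => top i j) hm).
have Hrow i : i < m -> i != 3 -> (((\sum_(j < n) f i j)%:R : 'Z_3) = (c i)%:R)%R.
  move=> hi hi3; case: (ltnP i 4) => h4.
  - have hi3' : i < 3 by move: h4 hi3; case: i {hi} => [|[|[|[|i]]]].
    rewrite rowtop // natrD.
    rewrite (eqZ3 (HAr _ hi3')). rewrite (natrD _ (c i)) natrM -addrA -{2}(mul1r (base i)%:R%R) -mulrDl.
    by rewrite natr1 Z3_3 mul0r addr0.
  - rewrite rowlow //; apply: eqZ3; exact: sv_mod.
have Hcol j : j < n -> (((\sum_(i < m) f i j)%:R : 'Z_3) = (e j)%:R)%R.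
  move=> hj; rewrite col; case: (ltnP j 6) => hj6.
  - have -> : \sum_(i < 4) top i j = \sum_(i < 4) ent A i j.
      by apply: eq_bigr => i _; rewrite /top hj6.
    rewrite natrD (eqZ3 (HAc _ hj6).1) (natrD _ (e j)) natrM -addrA -{2}(mul1r (r j)%:R%R) -mulrDl.
    by rewrite natr1 Z3_3 mul0r addr0.
  - have -> : r j = 0.
      apply: big1 => i _; have := sv_bnd (c i); rewrite -/(s i) => /andP [_ hs].
      have -> : (j < s i) = false.
        by apply/negbTE; rewrite -leqNgt; apply: leq_trans hs (leq_trans (isT : 3 <= 6) hj6).
      by rewrite andbF.
    have -> : \sum_(i < 4) top i j = \sum_(i < 4) V (e j) j i.
      by apply: eq_bigr => i _; rewrite /top ltnNge hj6.
    by rewrite addn0; apply: eqZ3; exact: V_sum.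
have Hrow3 : 3 < m -> (((\sum_(j < n) f 3 j)%:R : 'Z_3) = (c 3)%:R)%R.
  move=> h3.
  have Z : (\sum_(i < m) ((\sum_(j < n) f i j)%:R : 'Z_3) = \sum_(i < m) (c i)%:R)%R.
    rewrite -natr_sum exchange_big /= natr_sum.
    rewrite (eq_bigr (fun j : 'I_n => ((e j)%:R : 'Z_3))%R); last by move=> j _; apply: Hcol.
    by rewrite -natr_sum -hsum natr_sum.
  pose i3 : 'I_m := Ordinal h3.
  rewrite (bigD1 i3) // [in RHS](bigD1 i3) //= in Z.
  have Z2 : (\sum_(i < m | i != i3) ((\sum_(j < n) f i j)%:R : 'Z_3) =
             \sum_(i < m | i != i3) (c i)%:R)%R.
    by apply: eq_bigr => i hi; apply: Hrow.
  by rewrite Z2 in Z; exact: (addIr _ Z).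
exists f; split.
- move=> i hi; case: (eqVneq i 3) => [->|h3]; [exact: Hrow3 | exact: Hrow].
- exact: Hcol.
- move=> t ht; exists (6 + (t + 2) %% 4).
  have hj : 6 + (t + 2) %% 4 < n.
    by apply: leq_trans _ hn; rewrite -[10]/(6 + 4) ltn_add2l ltn_pmod.
  split => //; apply/andP.
  by case: t ht {hj} => [|[|[|[|t]]]] // _; exact: V_cyc.
- move=> j hj; case: (ltnP j 6) => hj6.
  + have [_ [[p [hp hp1]] [q [hq hq1]]]] := HAc _ hj6.
    by exists p, q; rewrite /f /top hp hq hj6.
  + exists (j %% 4), ((j %% 4 + 1) %% 4); rewrite /f /top !ltn_pmod // ltnNge hj6 /=.
    by move/andP: (V_cyc (e j) j) => [-> ->].
- move=> i hi4 hi; exists 0, 9; rewrite /f.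
  have -> : (i < 4) = false by rewrite ltnNge hi4.
  have := sv_bnd (c i); rewrite -/(s i) => /andP [h0 h3].
  split => //; first by apply: leq_trans _ hn.
  by rewrite -leqNgt; apply: leq_trans h3 _.
Qed.

End P4sec.


Lemma card_sum m n (P : 'I_m + 'I_n -> bool) :
  #|[set u | P u]| = \sum_(i < m) P (inl i) + \sum_(j < n) P (inr j).
Proof.
rewrite -sum1_card big_mkcond big_sumType /=.
by congr (_ + _); apply: eq_bigr => i _; rewrite inE; case: (P _).
Qed.

Lemma sum_neg n (F : 'I_n -> bool) :
  (((\sum_(j < n) ~~ F j)%:R : 'Z_3) = n%:R - (\sum_(j < n) F j)%:R)%R.
Proof.
have h : (\sum_(j < n) ~~ F j) + \sum_(j < n) F j = n.
  by rewrite -big_split /= -[n in RHS]card_ord -sum1_card; apply: eq_bigr => j _; case: (F j).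
by apply/eqP; rewrite eq_sym subr_eq -natrD h.
Qed.

Theorem mainTheorem12 (m n : nat) (hm : 4 <= m) (hn : 10 <= n) :
  in_S3 (Kmn_adj m n).
Proof.
case: m hm => [|m'] // hm; case: n hn => [|n'] // hn.
move=> beta hbeta.
pose c i := 2 * (val (beta (inl (inord i))) + n'.+1).
pose e j := 2 * m'.+1 + val (beta (inr (inord j))).
pose SA := (\sum_(i < m'.+1) beta (inl i))%R.
pose SB := (\sum_(j < n'.+1) beta (inr j))%R.
have hAB : (SA + SB = 0)%R by move: hbeta; rewrite big_sumType.
have hce : ((\sum_(i < m'.+1) c i)%:R : 'Z_3)%R = ((\sum_(j < n'.+1) e j)%:R)%R.
  rewrite !natr_sum.
  rewrite (eq_bigr (fun i : 'I_m'.+1 => 2%:R * (beta (inl i) + n'.+1%:R)))%R; last first.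
    by move=> i _; rewrite /c natrM natrD Z3_val inord_val.
  rewrite (eq_bigr (fun j : 'I_n'.+1 => (2 * m'.+1)%:R + beta (inr j)))%R; last first.
    by move=> j _; rewrite /e natrD Z3_val inord_val.
  rewrite -mulr_sumr !big_split /= -/SA -/SB !sumr_const !card_ord.
  have -> : SB = (- SA)%R by apply: (addrI SA); rewrite hAB subrr.
  apply/eqP; rewrite -subr_eq0; apply/eqP.
  have -> : (2%:R * (SA + n'.+1%:R *+ m'.+1) - ((2 * m'.+1)%:R *+ n'.+1 - SA) =
     3%:R * SA :> 'Z_3)%R by ring.
  by rewrite Z3_3 mul0r.
have [f [Hr Hc H1 H2 H3]] := core hm hn hce.
exists (Dof m'.+1 n'.+1 f); split; [split|split].
- by case=> [i|j] [i'|j'].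
- by case=> [i|j] [i'|j'] //= _; case: (f _ _).
- exact: conn_lemma.
case=> [i|j]; rewrite /outdeg /indeg !card_sum /Dof /= !big1_eq ?addn0 ?add0n.
- rewrite (sum_neg (fun j : 'I_n'.+1 => f i j)) Hr // /c natrM natrD Z3_val inord_val.
  apply/eqP; rewrite -subr_eq0; apply/eqP.
  have -> : ((2 * (beta (inl i) + n'.+1%:R)) - (n'.+1%:R - 2 * (beta (inl i) + n'.+1%:R))
     - beta (inl i) = 3%:R * (beta (inl i) + n'.+1%:R) :> 'Z_3)%R by ring.
  by rewrite Z3_3 mul0r.
- rewrite (sum_neg (fun i : 'I_m'.+1 => f i j)) Hc // /e natrD Z3_val inord_val.
  apply/eqP; rewrite -subr_eq0; apply/eqP.
  have -> : ((m'.+1%:R - ((2 * m'.+1)%:R + beta (inr j))) - ((2 * m'.+1)%:R + beta (inr j))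
     - beta (inr j) = 3%:R * (- (m'.+1%:R + beta (inr j))) :> 'Z_3)%R by ring.
  by rewrite Z3_3 mul0r.
Qed.
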